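(* Fix bidder $i$ and $v_{-i}$, and assume $f_{i,k}>0$ for all $k$. Suppose $k\mapsto x_i(z_{i,k},v_{-i})$ is non-decreasing and the actual payments $p_i(z_{i,k},v_{-i})\ge 0$ satisfy $p_i(z_{i,\ell},v_{-i})^2= z_{i,\ell}x_i(z_{i,\ell},v_{-i})-\sum_{j=1}^{\ell-1}(z_{i,j+1}-z_{i,j})x_i(z_{i,j},v_{-i})$ for all $\ell$. Then $$\sqrt{\sum_{k=1}^{K_i} f_{i,k}\,\varphi_{i,k}\,x_i(z_{i,k},v_{-i})}\ \ge\ \sum_{k=1}^{K_i} f_{i,k}\,p_i(z_{i,k},v_{-i}).$$
   Context: Bidder $i$'s type space is $V_i=\{z_{i,1}<\dots<z_{i,K_i}\}\subset[0,\infty)$, with the convention $z_{i,K_i+1}=z_{i,K_i}$; $f_{i,k}$ is the probability of $z_{i,k}$ and $F_{i,k}=\sum_{j\le k}f_{i,j}$. The (discrete) virtual value is $\varphi_{i,k}=z_{i,k}-(z_{i,k+1}-z_{i,k})\frac{1-F_{i,k}}{f_{i,k}}$. $x_i(\cdot,v_{-i}):V_i\to[0,1]$ is bidder $i$'s allocation given the others' types. *)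

(* Defs.v *)
From Stdlib Require Import Reals Lra Lia.
Open Scope R_scope.

(* sum1 n g = g 1 + g 2 + ... + g n  (indices 1..n, as in the paper) *)
Fixpoint sum1 (n : nat) (g : nat -> R) : R :=
  match n with
  | O => 0
  | S m => sum1 m g + g (S m)
  end.

(* z_{k+1} with the convention z_{K+1} = z_K *)
Definition znext (K : nat) (z : nat -> R) (k : nat) : R :=
  if Nat.ltb k K then z (S k) else z K.

Definition cdf (f : nat -> R) (k : nat) : R := sum1 k f.

Definition virt (K : nat) (z f : nat -> R) (k : nat) : R :=
  z k - (znext K z k - z k) * (1 - cdf f k) / f k.

(* Main.v *)
Require Import Defs.
From Stdlib Require Import Reals Lra Lia.
Open Scope R_scope.

Lemma sum1_ext n g h : (forall k, (1 <= k <= n)%nat -> g k = h k) -> sum1 n g = sum1 n h.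
Proof. induction n; simpl; intros H; [reflexivity|]. rewrite IHn by (intros; apply H; lia). rewrite H by lia. reflexivity. Qed.

Lemma sum1_plus n g h : sum1 n (fun k => g k + h k) = sum1 n g + sum1 n h.
Proof. induction n; simpl; [lra|]. rewrite IHn; lra. Qed.

Lemma sum1_minus n g h : sum1 n (fun k => g k - h k) = sum1 n g - sum1 n h.
Proof. induction n; simpl; [lra|]. rewrite IHn; lra. Qed.

Lemma sum1_scal n c g : sum1 n (fun k => c * g k) = c * sum1 n g.
Proof. induction n; simpl; [lra|]. rewrite IHn; lra. Qed.

Lemma sum1_nonneg n g : (forall k, (1 <= k <= n)%nat -> 0 <= g k) -> 0 <= sum1 n g.
Proof. induction n; simpl; intros H; [lra|]. assert (0 <= g (S n)) by (apply H; lia).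
  assert (0 <= sum1 n g) by (apply IHn; intros; apply H; lia). lra. Qed.

Lemma ident n (z f x : nat -> R) :
  sum1 n (fun k => f k * (z k * x k - sum1 (k - 1) (fun j => (z (S j) - z j) * x j)))
  = sum1 n (fun k => f k * z k * x k)
    - sum1 n (fun j => (z (S j) - z j) * x j * (cdf f n - cdf f j)).
Proof.
  induction n; simpl; [lra|]. rewrite IHn. unfold cdf at 1 3. simpl.
  replace (n - 0)%nat with n by lia.
  assert (E : sum1 n (fun j => (z (S j) - z j) * x j * (sum1 n f + f (S n) - cdf f j))
   = sum1 n (fun j => (z (S j) - z j) * x j * (cdf f n - cdf f j))
     + f (S n) * sum1 n (fun j => (z (S j) - z j) * x j)).
  { rewrite <- sum1_scal, <- sum1_plus. apply sum1_ext. intros. unfold cdf. generalize (z (S k) - z k) (x k) (sum1 n f) (f (S n)) (sum1 k f). intros. ring. }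
  rewrite E. unfold cdf. ring.
Qed.

Theorem mainTheorem4 (K : nat) (z f x p : nat -> R)
  (HK : (1 <= K)%nat)
  (Hz0 : forall k, (1 <= k <= K)%nat -> 0 <= z k)
  (Hzinc : forall k, (1 <= k < K)%nat -> z k < z (S k))
  (Hfpos : forall k, (1 <= k <= K)%nat -> 0 < f k)
  (Hfsum : sum1 K f = 1)
  (Hx01 : forall k, (1 <= k <= K)%nat -> 0 <= x k <= 1)
  (Hxmono : forall k, (1 <= k < K)%nat -> x k <= x (S k))
  (Hp0 : forall k, (1 <= k <= K)%nat -> 0 <= p k)
  (Hpay : forall l, (1 <= l <= K)%nat ->
     (p l) ^ 2 = z l * x l - sum1 (l - 1) (fun j => (z (S j) - z j) * x j)) :
  sqrt (sum1 K (fun k => f k * virt K z f k * x k)) >= sum1 K (fun k => f k * p k).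
Proof.
  set (A := sum1 K (fun k => f k * virt K z f k * x k)).
  set (Sm := sum1 K (fun k => f k * p k)).
  assert (HA : A = sum1 K (fun k => f k * p k ^ 2)).
  { rewrite (sum1_ext K (fun k => f k * p k ^ 2)
      (fun k => f k * (z k * x k - sum1 (k - 1) (fun j => (z (S j) - z j) * x j))))
      by (intros; rewrite Hpay by lia; reflexivity).
    rewrite ident. unfold A. rewrite <- sum1_minus. apply sum1_ext. intros k Hk.
    unfold virt. replace (cdf f K) with 1 by (unfold cdf; auto).
    assert (f k <> 0) by (specialize (Hfpos k Hk); lra).
    unfold znext. destruct (Nat.ltb k K) eqn:Hl.
    - field. auto.
    - apply Nat.ltb_ge in Hl. assert (k = K) by lia. subst k. replace (cdf f K) with 1 by (unfold cdf; auto).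
      field. auto. }
  assert (HS0 : 0 <= Sm).
  { apply sum1_nonneg. intros. apply Rmult_le_pos; [left; apply Hfpos; auto| apply Hp0; auto]. }
  assert (Hq : 0 <= sum1 K (fun k => f k * (p k - Sm) ^ 2)).
  { apply sum1_nonneg. intros. apply Rmult_le_pos; [left; apply Hfpos; auto| apply pow2_ge_0]. }
  assert (Hexp : sum1 K (fun k => f k * (p k - Sm) ^ 2)
     = sum1 K (fun k => f k * p k ^ 2) - 2 * Sm * Sm + Sm * Sm * sum1 K f).
  { rewrite <- sum1_scal.
    assert (E: sum1 K (fun k => f k * (p k - Sm) ^ 2) =
       sum1 K (fun k => (f k * p k ^ 2 - 2 * Sm * (f k * p k)) + Sm * Sm * f k))
      by (apply sum1_ext; intros; ring).
    rewrite E, sum1_plus, sum1_minus, sum1_scal. reflexivity. }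
  rewrite Hfsum in Hexp.
  assert (HSA : Sm * Sm <= A) by (rewrite HA; lra).
  apply Rle_ge. rewrite <- (sqrt_square Sm) by exact HS0.
  apply sqrt_le_1_alt. exact HSA.
Qed.
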